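(* The canonical model $\mathcal{M}^{Can}$ is a Trust model; that is, $R$ is serial and transitive, and for each $\Gamma\in I$ and each propositional formula $\varphi$, $\|\varphi\|_\Gamma\neq\emptyset$ implies $\mathit{most}(\|\varphi\|_\Gamma)\neq\emptyset$.
   Context: $\mathcal{L}_T$: $\alpha::=\varphi\mid\varphi\rightsquigarrow\varphi\mid B(\alpha)\mid\alpha*\alpha\mid\neg\alpha$, with $\varphi$ ranging over classical propositional formulas (set $\mathcal{L}_{CL}$) and $*\in\{\land,\lor,\to,\leftrightarrow\}$. SBTrust is the Hilbert system ($\varphi,\psi,\chi,\varphi_i,\psi_i$ propositional; $\alpha,\beta\in\mathcal{L}_T$; rule outputs in $\mathcal{L}_T$): classical tautologies and Modus Ponens; $\varphi\rightsquigarrow\varphi$; $(\varphi\rightsquigarrow\bot)\to\neg\varphi$; $((\psi\land\chi)\rightsquigarrow\varphi)\to(\psi\rightsquigarrow(\chi\to\varphi))$; $(\neg(\varphi\leftrightarrow\psi)\rightsquigarrow\bot)\to((\varphi\rightsquigarrow\chi)\leftrightarrow(\psi\rightsquigarrow\chi))$; rule RCK: from $(\varphi_1\land\dots\land\varphi_n)\to\varphi_{n+1}$ infer $\bigwedge_{j\le n}(\psi\rightsquigarrow\varphi_j)\to(\psi\rightsquigarrow\varphi_{n+1})$; rule $\mathbf{S5_F}$: from $(\ell_1\land\dots\land\ell_n)\to\chi$ infer $(\ell_1\land\dots\land\ell_n)\to(\neg\chi\rightsquigarrow\bot)$, each $\ell_j$ being $\varphi_j\rightsquigarrow\psi_j$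 or its negation, $\chi$ propositional; $B(\alpha\to\beta)\to(B\alpha\to B\beta)$; $B\alpha\to\neg B\neg\alpha$; $B\alpha\to BB\alpha$; necessitation for $B$. MCS: $\Gamma\subseteq\mathcal{L}_T$ with $\Gamma\nvdash\bot$ and, for each $\alpha$, $\alpha\in\Gamma$ or $\neg\alpha\in\Gamma$. $\Gamma\leftrightsquigarrow\Delta$ iff the MCSs contain the same formulas of the form $\chi\rightsquigarrow\psi$; $[\Gamma]_\leftrightsquigarrow$ its class. $\rightsquigarrow_\varphi(\Gamma)=\{\psi:\varphi\rightsquigarrow\psi\in\Gamma\}$; $\Delta$ is $\varphi$-likely for $\Gamma$ if $\rightsquigarrow_\varphi(\Gamma)\subseteq\Delta$. $S_\Gamma=[\Gamma]_\leftrightsquigarrow\times\mathcal{L}_{CL}\times\{0,1,2\}$; $(\Delta,\varphi,i)\succeq_\Gamma(\Omega,\psi,j)$ iff ($\Delta$ is $\varphi$-likely for $\Gamma$ and $\varphi\in\Omega$) or ($i=1,j=0$) or ($i=2,j=1$) or ($i=0,j=2$). Fix a set $I$ containing exactly one representative of each $\leftrightsquigarrow$-class. The canonical model is $\mathcal{M}^{Can}=\langle S,(S_\Gamma)_{\Gamma\in I},(\succeq_\Gamma)_{\Gamma\in I},R,V\rangle$ with $S=\bigcup_{\Gamma\in I}S_\Gamma$, $V(p)=\{(\Delta,\varphi,i)\in S:p\in\Delta\}$, and $(\Delta,\varphi,i)R(\Omega,\psi,j)$ iff for all $\alpha\in\mathcal{L}_T$, $B(\alpha)\in\Delta\Rightarrow\alpha\in\Omega$.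 Truth: $s\models p$ iff $s\in V(p)$; Boolean clauses as usual; $s\models\varphi\rightsquigarrow\psi$ iff $\mathit{most}(\|\varphi\|_\Gamma)\subseteq\|\psi\|_\Gamma$ where $s\in S_\Gamma$; $s\models B(\alpha)$ iff $v\models\alpha$ for all $v$ with $sRv$; here $\|\varphi\|_\Gamma=\{v\in S_\Gamma:v\models\varphi\}$ and $\mathit{most}(X)=\{x\in X:\forall y\in X\,(y\succeq_\Gamma x\Rightarrow x\succeq_\Gamma y)\}$. A Trust model is a structure $\langle S,(S_i)_{i\in I},(\succeq_i)_{i\in I},R,V\rangle$ where $R\subseteq S\times S$ is serial and transitive, $(S_i)$ is a partition of $S$, each $\succeq_i\subseteq S_i\times S_i$, $V$ maps variables to subsets of $S$, and limitedness holds: for every $i$ and propositional $\varphi$, $\|\varphi\|_i\neq\emptyset\Rightarrow\mathit{most}(\|\varphi\|_i)\neq\emptyset$. *)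

(* Defs.v *)
From Stdlib Require Import List Bool.
Import ListNotations.

Inductive pform : Type :=
| PVar : nat -> pform
| PBot : pform
| PNot : pform -> pform
| PAnd : pform -> pform -> pform
| POr  : pform -> pform -> pform
| PImp : pform -> pform -> pform
| PIff : pform -> pform -> pform.

Definition PTop : pform := PNot PBot.

Inductive tform : Type :=
| TProp : pform -> tform
| TCond : pform -> pform -> tform
| TB    : tform -> tform
| TNot  : tform -> tform
| TAnd  : tform -> tform -> tform
| TOr   : tform -> tform -> tform
| TImp  : tform -> tform -> tform
| TIff  : tform -> tform -> tform.

Definition TBot : tform := TProp PBot.
Definition TTop : tform := TProp PTop.

Fixpoint pconj (l : list pform) : pform :=
  match l with
  | [] => PTop
  | [x] => x
  | x :: r => PAnd x (pconj r)
  end.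

Fixpoint tconj (l : list tform) : tform :=
  match l with
  | [] => TTop
  | [x] => x
  | x :: r => TAnd x (tconj r)
  end.

(* Boolean evaluation, treating propositional variables, conditionals
   phi ~> psi and belief formulas B alpha as atoms. *)
Fixpoint peval (v : nat -> bool) (f : pform) : bool :=
  match f with
  | PVar n => v n
  | PBot => false
  | PNot a => negb (peval v a)
  | PAnd a b => peval v a && peval v b
  | POr a b => peval v a || peval v b
  | PImp a b => implb (peval v a) (peval v b)
  | PIff a b => eqb (peval v a) (peval v b)
  end.

Fixpoint teval (v : nat -> bool) (vc : pform -> pform -> bool)
  (vb : tform -> bool) (f : tform) : bool :=
  match f with
  | TProp p => peval v p
  | TCond p q => vc p q
  | TB a => vb a
  | TNot a => negb (teval v vc vb a)
  | TAnd a b => teval v vc vb a && teval v vc vb b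
  | TOr a b => teval v vc vb a || teval v vc vb b
  | TImp a b => implb (teval v vc vb a) (teval v vc vb b)
  | TIff a b => eqb (teval v vc vb a) (teval v vc vb b)
  end.

Definition tautology (a : tform) : Prop :=
  forall v vc vb, teval v vc vb a = true.

Definition is_literal (t : tform) : Prop :=
  exists p q, t = TCond p q \/ t = TNot (TCond p q).

Inductive Thm : tform -> Prop :=
| ax_taut : forall a, tautology a -> Thm a
| r_mp : forall a b, Thm a -> Thm (TImp a b) -> Thm b
| ax_id : forall p, Thm (TCond p p)
| ax_bot : forall p, Thm (TImp (TCond p PBot) (TProp (PNot p)))
| ax_sh : forall p q r,
    Thm (TImp (TCond (PAnd q r) p) (TCond q (PImp r p)))
| ax_lle : forall p q r,
    Thm (TImp (TCond (PNot (PIff p q)) PBot)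
              (TIff (TCond p r) (TCond q r)))
| r_rck : forall (q : pform) (l : list pform) (p : pform),
    Thm (TProp (PImp (pconj l) p)) ->
    Thm (TImp (tconj (map (fun pj => TCond q pj) l)) (TCond q p))
| r_s5f : forall (l : list tform) (c : pform),
    Forall is_literal l ->
    Thm (TImp (tconj l) (TProp c)) ->
    Thm (TImp (tconj l) (TCond (PNot c) PBot))
| ax_K : forall a b, Thm (TImp (TB (TImp a b)) (TImp (TB a) (TB b)))
| ax_D : forall a, Thm (TImp (TB a) (TNot (TB (TNot a))))
| ax_4 : forall a, Thm (TImp (TB a) (TB (TB a)))
| r_nec : forall a, Thm a -> Thm (TB a).

Definition Derives (G : tform -> Prop) (a : tform) : Prop :=
  exists l, Forall G l /\ Thm (TImp (tconj l) a).

Definition MCS (G : tform -> Prop) : Prop :=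
  ~ Derives G TBot /\ forall a, G a \/ G (TNot a).

Definition cond_equiv (G D : tform -> Prop) : Prop :=
  forall p q, G (TCond p q) <-> D (TCond p q).

Definition likely (G : tform -> Prop) (p : pform) (D : tform -> Prop) : Prop :=
  forall q, G (TCond p q) -> D (TProp q).

Section Models.
Variables (X Idx : Type).

Fixpoint psat (V : nat -> X -> Prop) (s : X) (f : pform) : Prop :=
  match f with
  | PVar n => V n s
  | PBot => False
  | PNot a => ~ psat V s a
  | PAnd a b => psat V s a /\ psat V s b
  | POr a b => psat V s a \/ psat V s b
  | PImp a b => psat V s a -> psat V s b
  | PIff a b => psat V s a <-> psat V s b
  end.

Definition most (ge : X -> X -> Prop) (A : X -> Prop) (x : X) : Prop :=
  A x /\ forall y, A y -> ge y x -> ge x y.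

Definition ext (Si : X -> Prop) (V : nat -> X -> Prop) (f : pform) (x : X) : Prop :=
  Si x /\ psat V x f.

Definition TrustModel (S : X -> Prop) (I : Idx -> Prop) (Sf : Idx -> X -> Prop)
  (ge : Idx -> X -> X -> Prop) (R : X -> X -> Prop) (V : nat -> X -> Prop) : Prop :=
  (forall s t, R s t -> S s /\ S t) /\
  (forall s, S s -> exists t, R s t) /\
  (forall s t u, R s t -> R t u -> R s u) /\
  (forall i, I i -> exists x, Sf i x) /\
  (forall i x, I i -> Sf i x -> S x) /\
  (forall x, S x -> exists i, I i /\ Sf i x) /\
  (forall i j x, I i -> I j -> Sf i x -> Sf j x -> i = j) /\
  (forall i x y, I i -> ge i x y -> Sf i x /\ Sf i y) /\
  (forall p x, V p x -> S x) /\
  (forall i f, I i -> (exists x, ext (Sf i) V f x) ->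
                      exists x, most (ge i) (ext (Sf i) V f) x).
End Models.

Inductive three : Type := T0 | T1 | T2.

Definition cstate : Type := ((tform -> Prop) * pform * three)%type.

Definition rep_set (I : (tform -> Prop) -> Prop) : Prop :=
  (forall G, I G -> MCS G) /\
  (forall D, MCS D -> exists G, I G /\ cond_equiv G D) /\
  (forall G G', I G -> I G' -> cond_equiv G G' -> G = G').

Definition CanSi (G : tform -> Prop) (s : cstate) : Prop :=
  let '(D, _, _) := s in MCS D /\ cond_equiv G D.

Definition CanS (I : (tform -> Prop) -> Prop) (s : cstate) : Prop :=
  exists G, I G /\ CanSi G s.

Definition cyc (i j : three) : Prop :=
  (i = T1 /\ j = T0) \/ (i = T2 /\ j = T1) \/ (i = T0 /\ j = T2).

Definition CanGe (G : tform -> Prop) (s t : cstate) : Prop :=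
  CanSi G s /\ CanSi G t /\
  let '(D, p, i) := s in let '(Om, _, j) := t in
  ((likely G p D /\ Om (TProp p)) \/ cyc i j).

Definition CanR (I : (tform -> Prop) -> Prop) (s t : cstate) : Prop :=
  CanS I s /\ CanS I t /\
  let '(D, _, _) := s in let '(Om, _, _) := t in
  forall a, D (TB a) -> Om a.

Definition CanV (I : (tform -> Prop) -> Prop) (n : nat) (s : cstate) : Prop :=
  CanS I s /\ let '(D, _, _) := s in D (TProp (PVar n)).

(* Main.v *)
Require Import Defs.
From Stdlib Require Import List Bool Classical Arith Lia Cantor.
Import ListNotations.

Lemma tev_tconj v vc vb l : teval v vc vb (tconj l) = forallb (teval v vc vb) l.
Proof.
  induction l as [|x r IH]; [reflexivity|].
  destruct r as [|y r'].
  - simpl. now rewrite andb_true_r.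
  - change (tconj (x :: y :: r')) with (TAnd x (tconj (y :: r'))).
    simpl in *. now rewrite IH.
Qed.

Lemma fb_cons (f : tform -> bool) x l : forallb f (x :: l) = f x && forallb f l.
Proof. reflexivity. Qed.

Ltac taut :=
  let v := fresh "v" in let vc := fresh "vc" in let vb := fresh "vb" in
  intros v vc vb; cbn [teval TBot TTop PTop]; repeat rewrite ?tev_tconj; repeat rewrite ?fb_cons; cbn [teval peval forallb TBot TTop PTop];
  repeat match goal with
  | |- context [teval v vc vb ?x] => destruct (teval v vc vb x)
  | |- context [peval v ?x] => destruct (peval v x)
  | |- context [vc ?p ?q] => destruct (vc p q)
  | |- context [vb ?p] => destruct (vb p)
  | |- context [forallb ?f ?l] => destruct (forallb f l)
  end; reflexivity.

Lemma thm_taut a b : Thm a -> tautology (TImp a b) -> Thm b.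
Proof. intros Ha Ht. eapply r_mp; [exact Ha| now apply ax_taut]. Qed.

Lemma forallb_sub (f : tform -> bool) l1 l2 :
  (forall x, In x l1 -> In x l2) -> forallb f l2 = true -> forallb f l1 = true.
Proof.
  intros H H2. apply forallb_forall. intros x Hx.
  rewrite forallb_forall in H2. auto.
Qed.

Lemma lift l1 l2 b : (forall x, In x l1 -> In x l2) ->
  Thm (TImp (tconj l1) b) -> Thm (TImp (tconj l2) b).
Proof.
  intros H Hl. eapply thm_taut; [exact Hl|].
  intros v vc vb. simpl. rewrite !tev_tconj.
  destruct (forallb (teval v vc vb) l2) eqn:E2; simpl;
   [|destruct (forallb (teval v vc vb) l1); destruct (teval v vc vb b); reflexivity].
  rewrite (forallb_sub _ l1 l2 H E2). simpl. destruct (teval v vc vb b); reflexivity.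
Qed.

Lemma mcs_derive D l b : MCS D -> Forall D l -> Thm (TImp (tconj l) b) -> D b.
Proof.
  intros [Hc Ht] Hl Hd. destruct (Ht b) as [H|H]; [exact H|].
  exfalso. apply Hc. exists (TNot b :: l). split; [now constructor|].
  eapply thm_taut; [exact Hd|]. taut.
Qed.

Lemma mcs_thm D a : MCS D -> Thm a -> D a.
Proof.
  intros HD Ha. apply (mcs_derive D [] a HD); [constructor|].
  eapply thm_taut; [exact Ha|]. taut.
Qed.

Lemma mcs_mp D a b : MCS D -> D a -> D (TImp a b) -> D b.
Proof.
  intros HD Ha Hab. apply (mcs_derive D [a; TImp a b] b HD); [repeat constructor; auto|].
  apply ax_taut. taut.
Qed.

Lemma mcs_bot D : MCS D -> ~ D TBot.
Proof.
  intros [Hc _] H. apply Hc. exists [TBot]. split; [now constructor|].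
  apply ax_taut. taut.
Qed.

Lemma mcs_not D a : MCS D -> (D (TNot a) <-> ~ D a).
Proof.
  intros HD. split.
  - intros H1 H2. apply (mcs_bot D HD). apply (mcs_derive D [a; TNot a] TBot HD);
      [repeat constructor; auto| apply ax_taut; taut].
  - intros H. destruct (proj2 HD a); tauto.
Qed.

Lemma mcs_tot D a : MCS D -> D a \/ D (TNot a).
Proof. intros [_ H]. apply H. Qed.

Ltac mder D HD l := apply (mcs_derive D l _ HD); [repeat constructor; assumption | apply ax_taut; taut].

Lemma mcs_pnot D a : MCS D -> (D (TProp (PNot a)) <-> ~ D (TProp a)).
Proof.
  intros HD. rewrite <- (mcs_not D (TProp a) HD). split; intro H.
  - mder D HD [TProp (PNot a)].
  - mder D HD [TNot (TProp a)].
Qed.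

Lemma mcs_pand D a b : MCS D -> (D (TProp (PAnd a b)) <-> D (TProp a) /\ D (TProp b)).
Proof.
  intros HD. split.
  - intro H. split; mder D HD [TProp (PAnd a b)].
  - intros [H1 H2]. mder D HD [TProp a; TProp b].
Qed.

Lemma mcs_por D a b : MCS D -> (D (TProp (POr a b)) <-> D (TProp a) \/ D (TProp b)).
Proof.
  intros HD. split.
  - intro H. destruct (mcs_tot D (TProp a) HD) as [H1|H1]; [now left|right].
    mder D HD [TProp (POr a b); TNot (TProp a)].
  - intros [H1|H1]; [mder D HD [TProp a] | mder D HD [TProp b]].
Qed.

Lemma mcs_pimp D a b : MCS D -> (D (TProp (PImp a b)) <-> (D (TProp a) -> D (TProp b))).
Proof.
  intros HD. split.
  - intros H H1. mder D HD [TProp (PImp a b); TProp a].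
  - intro H. destruct (mcs_tot D (TProp a) HD) as [H1|H1].
    + specialize (H H1). mder D HD [TProp b].
    + mder D HD [TNot (TProp a)].
Qed.

Lemma mcs_piff D a b : MCS D -> (D (TProp (PIff a b)) <-> (D (TProp a) <-> D (TProp b))).
Proof.
  intros HD. split.
  - intros H. split; intro H1; mder D HD [TProp (PIff a b); TProp a] || mder D HD [TProp (PIff a b); TProp b].
  - intro H. destruct (mcs_tot D (TProp a) HD) as [H1|H1].
    + assert (H2 := proj1 H H1). mder D HD [TProp a; TProp b].
    + destruct (mcs_tot D (TProp b) HD) as [H2|H2].
      * exfalso. apply (proj1 (mcs_not D _ HD) H1). now apply H.
      * mder D HD [TNot (TProp a); TNot (TProp b)].
Qed.

Lemma truth I D p i : MCS D -> CanS I (D, p, i) ->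
  forall f, psat cstate (CanV I) (D, p, i) f <-> D (TProp f).
Proof.
  intros HD HS f. induction f; simpl.
  - unfold CanV. tauto.
  - split; [tauto|]. apply (mcs_bot D HD).
  - rewrite (mcs_pnot D f HD). tauto.
  - rewrite (mcs_pand D f1 f2 HD). tauto.
  - rewrite (mcs_por D f1 f2 HD). tauto.
  - rewrite (mcs_pimp D f1 f2 HD). tauto.
  - rewrite (mcs_piff D f1 f2 HD). tauto.
Qed.

Lemma to_nat_inj p q : Cantor.to_nat p = Cantor.to_nat q -> p = q.
Proof.
  intro H. rewrite <- (cancel_of_to p), <- (cancel_of_to q). now rewrite H.
Qed.

Fixpoint pcode (f : pform) : nat :=
  match f with
  | PVar n => to_nat (0, n)
  | PBot => to_nat (1, 0)
  | PNot a => to_nat (2, pcode a)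
  | PAnd a b => to_nat (3, to_nat (pcode a, pcode b))
  | POr a b => to_nat (4, to_nat (pcode a, pcode b))
  | PImp a b => to_nat (5, to_nat (pcode a, pcode b))
  | PIff a b => to_nat (6, to_nat (pcode a, pcode b))
  end.

Fixpoint tcode (f : tform) : nat :=
  match f with
  | TProp p => to_nat (0, pcode p)
  | TCond a b => to_nat (1, to_nat (pcode a, pcode b))
  | TB a => to_nat (2, tcode a)
  | TNot a => to_nat (3, tcode a)
  | TAnd a b => to_nat (4, to_nat (tcode a, tcode b))
  | TOr a b => to_nat (5, to_nat (tcode a, tcode b))
  | TImp a b => to_nat (6, to_nat (tcode a, tcode b))
  | TIff a b => to_nat (7, to_nat (tcode a, tcode b))
  end.

Lemma pair_inj2 (a b c d : nat) : to_nat (a, b) = to_nat (c, d) -> a = c /\ b = d.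
Proof. intro H. apply to_nat_inj in H. split; [exact (f_equal fst H) | exact (f_equal snd H)]. Qed.

Ltac decode := repeat match goal with
  | H : to_nat (?a, ?b) = to_nat (?c, ?d) |- _ =>
      let H1 := fresh in let H2 := fresh in
      destruct (pair_inj2 a b c d H) as [H1 H2]; clear H;
      try discriminate H1; try discriminate H2
  end.

Lemma pcode_inj a b : pcode a = pcode b -> a = b.
Proof.
  revert b; induction a; destruct b; cbn [pcode]; intro H; decode; f_equal; auto.
Qed.

Lemma tcode_inj a b : tcode a = tcode b -> a = b.
Proof.
  revert b; induction a; destruct b; cbn [tcode]; intro H; decode; f_equal; auto using pcode_inj.
Qed.

Lemma thm_taut2 a b c : Thm a -> Thm b -> tautology (TImp a (TImp b c)) -> Thm c.
Proof. intros Ha Hb Ht. eapply r_mp; [exact Hb|]. eapply r_mp; [exact Ha| now apply ax_taut]. Qed.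

Lemma Derives_mono (G H : tform -> Prop) b : (forall x, G x -> H x) -> Derives G b -> Derives H b.
Proof. intros Hs [l [Hl Ht]]. exists l. split; [eapply Forall_impl; eauto | exact Ht]. Qed.

Lemma split_list (G : tform -> Prop) a l : Forall (fun x => G x \/ x = a) l ->
  exists l', Forall G l' /\ forall x, In x l -> In x (a :: l').
Proof.
  induction 1 as [|x r Hx Hr IH].
  - exists []. split; [constructor| intros x []].
  - destruct IH as [l' [H1 H2]]. destruct Hx as [Hx|Hx].
    + exists (x :: l'). split; [now constructor|].
      intros y [<-|Hy]; [simpl; auto|]. specialize (H2 y Hy). simpl in *. tauto.
    + exists l'. split; [auto|]. intros y [<-|Hy]; [subst; simpl; auto|auto].
Qed.

Lemma split_ext (G : tform -> Prop) a b : Derives (fun x => G x \/ x = a) b ->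
  exists l', Forall G l' /\ Thm (TImp (tconj (a :: l')) b).
Proof.
  intros [l [Hl Ht]]. destruct (split_list G a l Hl) as [l' [H1 H2]].
  exists l'. split; [auto|]. eapply lift; eauto.
Qed.

Lemma derives_cases (G : tform -> Prop) a :
  Derives (fun x => G x \/ x = a) TBot -> Derives (fun x => G x \/ x = TNot a) TBot ->
  Derives G TBot.
Proof.
  intros H1 H2. destruct (split_ext G a _ H1) as [l1 [F1 T1]].
  destruct (split_ext G (TNot a) _ H2) as [l2 [F2 T2]].
  exists (l1 ++ l2). split; [apply Forall_app; auto|].
  assert (T1' : Thm (TImp (tconj (a :: l1 ++ l2)) TBot)).
  { eapply lift; [|exact T1]. intros x [<-|Hx]; [left; auto| right; apply in_or_app; auto]. }
  assert (T2' : Thm (TImp (tconj (TNot a :: l1 ++ l2)) TBot)).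
  { eapply lift; [|exact T2]. intros x [<-|Hx]; [left; auto| right; apply in_or_app; auto]. }
  eapply thm_taut2; [exact T1' | exact T2' | taut].
Qed.

Fixpoint Lst (X : tform -> Prop) (n : nat) : tform -> Prop :=
  match n with
  | 0 => X
  | S m => fun a => Lst X m a \/
            (tcode a = m /\ ~ Derives (fun x => Lst X m x \/ x = a) TBot)
  end.

Lemma Lst_mono X n m a : n <= m -> Lst X n a -> Lst X m a.
Proof. induction 1; simpl; auto. Qed.

Lemma Lst_cons X : ~ Derives X TBot -> forall n, ~ Derives (Lst X n) TBot.
Proof.
  intros H0 n. induction n as [|m IH]; [exact H0|].
  destruct (classic (exists a, tcode a = m /\ ~ Derives (fun x => Lst X m x \/ x = a) TBot))
    as [[a [Ha Hd]]|Hn].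
  - intro Hc. apply Hd. eapply Derives_mono; [|exact Hc].
    intros x [Hx|[Hx _]]; [now left|right]. apply tcode_inj. congruence.
  - intro Hc. apply IH. eapply Derives_mono; [|exact Hc].
    intros x [Hx|Hx]; [exact Hx|]. exfalso. apply Hn. exists x. exact Hx.
Qed.

Definition Lim X a := exists n, Lst X n a.

Lemma Lim_fin X l : Forall (Lim X) l -> exists n, Forall (Lst X n) l.
Proof.
  induction 1 as [|x r [k Hk] Hr [n IH]]; [exists 0; constructor|].
  exists (max k n). constructor.
  - eapply Lst_mono; [|exact Hk]. lia.
  - eapply Forall_impl; [|exact IH]. intros y. apply Lst_mono. lia.
Qed.

Lemma lindenbaum X : ~ Derives X TBot -> exists D, MCS D /\ forall a, X a -> D a.
Proof.
  intros H0. exists (Lim X). split; [split|].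
  - intros [l [Hl Ht]]. destruct (Lim_fin X l Hl) as [n Hn].
    apply (Lst_cons X H0 n). exists l. auto.
  - intros a.
    destruct (classic (Derives (fun x => Lst X (tcode a) x \/ x = a) TBot)) as [Ha|Ha];
      [|left; exists (S (tcode a)); simpl; auto].
    destruct (classic (Derives (fun x => Lst X (tcode (TNot a)) x \/ x = TNot a) TBot)) as [Hb|Hb];
      [|right; exists (S (tcode (TNot a))); simpl; auto].
    exfalso. apply (Lst_cons X H0 (max (tcode a) (tcode (TNot a)))).
    apply (derives_cases _ a).
    + eapply Derives_mono; [|exact Ha]. intros x [Hx|Hx]; [left|right; auto].
      eapply Lst_mono; [|exact Hx]. lia.
    + eapply Derives_mono; [|exact Hb]. intros x [Hx|Hx]; [left|right; auto].
      eapply Lst_mono; [|exact Hx]. lia.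
  - intros a Ha. exists 0. exact Ha.
Qed.

Lemma mcs_K D a b : MCS D -> D (TB (TImp a b)) -> D (TB a) -> D (TB b).
Proof.
  intros HD H1 H2. apply (mcs_mp D (TB a)); auto.
  apply (mcs_mp D (TB (TImp a b))); auto. apply mcs_thm; auto. apply ax_K.
Qed.

Lemma B_conj D l : MCS D -> Forall (fun a => D (TB a)) l -> D (TB (tconj l)).
Proof.
  intros HD. induction 1 as [|x r Hx Hr IH].
  - apply mcs_thm; auto. apply r_nec. apply ax_taut. taut.
  - destruct r as [|y r']; [exact Hx|].
    change (tconj (x :: y :: r')) with (TAnd x (tconj (y :: r'))).
    apply (mcs_K D (tconj (y :: r'))); auto.
    apply (mcs_K D x); auto. apply mcs_thm; auto. apply r_nec. apply ax_taut. taut.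
Qed.

Lemma B_cons D : MCS D -> ~ Derives (fun a => D (TB a)) TBot.
Proof.
  intros HD [l [Hl Ht]].
  assert (H1 : D (TB TBot)).
  { apply (mcs_K D (tconj l)); [auto| |now apply B_conj].
    apply mcs_thm; auto. now apply r_nec. }
  assert (H2 : D (TNot (TB (TNot TBot)))).
  { apply (mcs_mp D (TB TBot)); auto. apply mcs_thm; auto. apply ax_D. }
  assert (H3 : D (TB (TNot TBot))).
  { apply mcs_thm; auto. apply r_nec. apply ax_taut. taut. }
  exact (proj1 (mcs_not D _ HD) H2 H3).
Qed.

Lemma pev_pconj v l : peval v (pconj l) = forallb (peval v) l.
Proof.
  induction l as [|x r IH]; [reflexivity|].
  destruct r as [|y r'].
  - simpl. now rewrite andb_true_r.
  - change (pconj (x :: y :: r')) with (PAnd x (pconj (y :: r'))).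
    simpl in *. now rewrite IH.
Qed.

Lemma fb_map v vc vb l : forallb (teval v vc vb) (map TProp l) = forallb (peval v) l.
Proof. induction l; simpl; congruence. Qed.

Definition LX (G : tform -> Prop) (f : pform) (a : tform) : Prop :=
  (exists q, a = TProp q /\ G (TCond f q)) \/ (is_literal a /\ G a).

Lemma LX_split G f l : Forall (LX G f) l ->
  exists ps ls, Forall (fun q => G (TCond f q)) ps /\ Forall is_literal ls /\ Forall G ls /\
    forall x, In x l -> In x (ls ++ map TProp ps).
Proof.
  induction 1 as [|x r Hx Hr [ps [ls [H1 [H2 [H3 H4]]]]]].
  - exists [], []. repeat split; auto; intros x [].
  - destruct Hx as [[q [-> Hq]]|[Hl Hg]].
    + exists (q :: ps), ls. repeat split; auto.
      intros y [<-|Hy]; apply in_or_app; [right; left; auto|].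
      apply H4 in Hy. apply in_app_or in Hy. destruct Hy; [left|right; right]; auto.
    + exists ps, (x :: ls). repeat split; auto.
      intros y [<-|Hy]; [left; auto|]. right. auto.
Qed.

Lemma mcs_iff1 D x y : MCS D -> D (TIff x y) -> D x -> D y.
Proof. intros HD H1 H2. mder D HD [TIff x y; x]. Qed.
Lemma mcs_iff2 D x y : MCS D -> D (TIff x y) -> D y -> D x.
Proof. intros HD H1 H2. mder D HD [TIff x y; y]. Qed.

Lemma mcs_lit G Om a : MCS G -> MCS Om -> cond_equiv G Om -> is_literal a -> G a -> Om a.
Proof.
  intros HG HO Hc [p [q [->| ->]]] Ha; [now apply Hc|].
  apply (mcs_not Om _ HO). intro H. apply Hc in H.
  exact (proj1 (mcs_not G _ HG) Ha H).
Qed.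

Lemma likely_cons G Om f : MCS G -> MCS Om -> cond_equiv G Om -> Om (TProp f) ->
  ~ Derives (LX G f) TBot.
Proof.
  intros HG HO Hc Hf [l [Hl Ht]].
  destruct (LX_split G f l Hl) as [ps [ls [H1 [H2 [H3 H4]]]]].
  assert (T : Thm (TImp (tconj (ls ++ map TProp ps)) TBot)) by (eapply lift; eauto).
  set (P := pconj ps). set (b := PAnd f (PNot P)). set (chi := PIff f b).
  assert (T2 : Thm (TImp (tconj ls) (TProp chi))).
  { eapply thm_taut; [exact T|]. intros v vc vb. cbn [teval TBot peval].
    rewrite !tev_tconj, forallb_app, fb_map. unfold chi, b, P. cbn [peval].
    rewrite pev_pconj.
    destruct (forallb (teval v vc vb) ls), (forallb (peval v) ps), (peval v f); reflexivity. }
  assert (G1 : G (TCond (PNot chi) PBot)).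
  { apply (mcs_derive G ls _ HG H3). now apply r_s5f. }
  assert (LLE : forall r, G (TIff (TCond f r) (TCond b r))).
  { intro r. apply (mcs_mp G _ _ HG G1). apply mcs_thm; auto. apply ax_lle. }
  assert (G2 : G (TCond f P)).
  { apply (mcs_derive G (map (fun pj => TCond f pj) ps) _ HG).
    - apply Forall_map. exact H1.
    - apply r_rck. apply ax_taut. unfold P. taut. }
  assert (G3 : G (TCond b P)) by (eapply mcs_iff1; eauto).
  assert (G4 : G (TCond b b)) by (apply mcs_thm; auto; apply ax_id).
  assert (G5 : G (TCond b PBot)).
  { apply (mcs_derive G (map (fun pj => TCond b pj) [P; b]) _ HG).
    - simpl. repeat constructor; auto.
    - apply r_rck. apply ax_taut. intros v vc vb. cbn [teval pconj peval]. unfold b.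
      cbn [peval]. destruct (peval v P), (peval v f); reflexivity. }
  assert (G6 : G (TCond f PBot)) by (eapply mcs_iff2; eauto).
  assert (O1 : Om (TProp (PNot f))).
  { apply (mcs_mp Om (TCond f PBot)); auto; [now apply Hc|]. apply mcs_thm; auto. apply ax_bot. }
  exact (proj1 (mcs_pnot Om f HO) O1 Hf).
Qed.

Lemma likely_exists G Om f : MCS G -> MCS Om -> cond_equiv G Om -> Om (TProp f) ->
  exists D, MCS D /\ cond_equiv G D /\ likely G f D /\ D (TProp f).
Proof.
  intros HG HO Hc Hf. destruct (lindenbaum _ (likely_cons G Om f HG HO Hc Hf)) as [D [HD HX]].
  exists D. split; [auto|]. split; [|split].
  - intros p q. split; intro H.
    + apply HX. right. split; [exists p, q; auto|auto].
    + destruct (mcs_tot G (TCond p q) HG) as [H'|H']; [auto|].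
      exfalso. apply (proj1 (mcs_not D _ HD) (HX _ (or_intror (conj (ex_intro _ p (ex_intro _ q (or_intror eq_refl))) H'))) H).
  - intros q Hq. apply HX. left. eauto.
  - apply HX. left. exists f. split; auto. apply mcs_thm; auto. apply ax_id.
Qed.

Theorem lemma4 (I : (tform -> Prop) -> Prop) (HI : rep_set I) :
  TrustModel cstate (tform -> Prop) (CanS I) I CanSi CanGe (CanR I) (CanV I).
Proof.
  destruct HI as [HI1 [HI2 HI3]].
  unfold TrustModel. split; [|split; [|split; [|split; [|split; [|split; [|split; [|split; [|split]]]]]]]].
  - intros s t [H1 [H2 _]]. auto.
  - intros [[D p] i] HS.
    assert (HD : MCS D) by (destruct HS as [G [_ [HD _]]]; exact HD).
    destruct (lindenbaum _ (B_cons D HD)) as [Om [HO HX]].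
    destruct (HI2 Om HO) as [G [HG Hc]].
    exists (Om, PBot, T0). split; [auto|]. split; [exists G; split; [auto| split; auto]|].
    intros a Ha. apply HX. exact Ha.
  - intros [[D p] i] [[E q] j] [[F r] k] [HS1 [HS2 H1]] [_ [HS3 H2]].
    split; [auto|]. split; [auto|]. intros a Ha.
    assert (HD : MCS D) by (destruct HS1 as [G [_ [HD _]]]; exact HD).
    apply H2. apply H1. apply (mcs_mp D (TB a)); auto. apply mcs_thm; auto. apply ax_4.
  - intros G HG. exists (G, PBot, T0). simpl. split; [auto|]. intros p q; tauto.
  - intros G x HG Hx. exists G. auto.
  - intros x Hx. exact Hx.
  - intros G G' [[D p] i] HG HG' [_ H1] [_ H2]. apply HI3; auto.
    intros a b. specialize (H1 a b). specialize (H2 a b). tauto.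
  - intros G x y _ [H1 [H2 _]]. auto.
  - intros n x [H _]. exact H.
  - intros G f HG [[[Om p] i] [HS Hp]].
    destruct HS as [HO Hc].
    assert (HSO : CanS I (Om, p, i)) by (exists G; split; [auto|split; auto]).
    rewrite (truth I Om p i HO HSO f) in Hp.
    destruct (likely_exists G Om f (HI1 G HG) HO Hc Hp) as [D [HD [HcD [Hl Hf]]]].
    assert (HSD : CanS I (D, f, T0)) by (exists G; split; [auto|split; auto]).
    exists (D, f, T0). split.
    + split; [split; auto|]. apply (truth I D f T0 HD HSD). exact Hf.
    + intros [[E q] j] [HE Hq] _. split; [split; auto|]. split; [exact HE|].
      left. split; [exact Hl|].
      destruct HE as [HE HcE].
      assert (HSE : CanS I (E, q, j)) by (exists G; split; [auto|split; auto]).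
      apply (truth I E q j HE HSE). exact Hq.
Qed.
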